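(* Let $c\in\mathbb{Q}$ and, for $n\ge1$, $\psi_n^{(c)}=R_y\phi_{n-1}^{(c)}R_x$. Then $\psi_1^{(c)}=R_{xy}$ and for $n\ge2$, $$\psi_n^{(c)}=\frac{1}{n-1}\Bigl([\theta^{(c)},\psi_{n-1}^{(c)}]-\tfrac12\bigl(R_z\psi_{n-1}^{(c)}+\psi_{n-1}^{(c)}R_z\bigr)-c\,\psi_{n-1}^{(c)}\partial_1\Bigr).$$
   Context: Let $\mathfrak{H}=\mathbb{Q}\langle x,y\rangle$, $z=x+y$. Products of operators denote composition, $[A,B]=AB-BA$. $R_w(w')=w'w$ (right multiplication). $H$ is the $\mathbb{Q}$-linear map with $H(w)=\deg(w)w$ for words $w$. $\partial_1$ is the derivation with $\partial_1(x)=xy$, $\partial_1(y)=-xy$. For $c\in\mathbb{Q}$, $\theta^{(c)}$ is the unique $\mathbb{Q}$-linear map with $\theta^{(c)}(x)=\frac12(xz+zx)$, $\theta^{(c)}(y)=\frac12(yz+zy)$ and $\theta^{(c)}(ww')=\theta^{(c)}(w)w'+w\theta^{(c)}(w')+c\,\partial_1(w)H(w')$. The operators $\phi_n^{(c)}$ ($n\ge0$) are defined by $\phi_0^{(c)}=\mathrm{id}_{\mathfrak{H}}$ and $\phi_n^{(c)}=\frac1n\bigl([\theta^{(c)},\phi_{n-1}^{(c)}]+\frac12(R_z\phi_{n-1}^{(c)}+\phi_{n-1}^{(c)}R_z)+c\,\partial_1\phi_{n-1}^{(c)}\bigr)$ for $n\ge1$. *)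

(* Defs.v *)
(* The free algebra Q<x,y> is represented by formal finite
   linear combinations of words; two representations denote the same element
   iff all their coefficients agree (see [coef], [opeq]). *)
From HB Require Import structures.
From mathcomp Require Import all_boot all_order all_algebra.
Set Implicit Arguments. Unset Strict Implicit. Unset Printing Implicit Defensive.
Import Order.TTheory GRing.Theory Num.Theory.
Local Open Scope ring_scope.

Definition letter := bool.
Definition lx : letter := false.
Definition ly : letter := true.
Definition word := seq letter.

Definition hQ := seq (rat * word).

Definition coef (p : hQ) (w : word) : rat := \sum_(t <- p | t.2 == w) t.1.

Definition heq (p q : hQ) : Prop := forall w, coef p w = coef q w.

Definition hword (w : word) : hQ := [:: (1, w)].
Definition hadd (p q : hQ) : hQ := p ++ q.
Definition hscale (a : rat) (p : hQ) : hQ := [seq (a * t.1, t.2) | t <- p].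
Definition hsub (p q : hQ) : hQ := hadd p (hscale (-1) q).
Definition hmul (p q : hQ) : hQ :=
  [seq (t.1 * s.1, t.2 ++ s.2) | t <- p, s <- q].

Definition hz : hQ := hadd (hword [:: lx]) (hword [:: ly]).

Definition op := hQ -> hQ.
Definition opeq (A B : op) : Prop := forall p, heq (A p) (B p).

Definition linext (f : word -> hQ) : op :=
  fun p => flatten [seq hscale t.1 (f t.2) | t <- p].

Definition opcomp (A B : op) : op := fun p => A (B p).
Definition opadd (A B : op) : op := fun p => hadd (A p) (B p).
Definition opsub (A B : op) : op := fun p => hsub (A p) (B p).
Definition opscale (a : rat) (A : op) : op := fun p => hscale a (A p).
Definition opbr (A B : op) : op := opsub (opcomp A B) (opcomp B A).
Definition opid : op := fun p => p.

Definition Rmul (q : hQ) : op := fun p => hmul p q.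

Definition Hw (w : word) : hQ := [:: ((size w)%:R, w)].
Definition Hop : op := linext Hw.

Definition d1letter (a : letter) : hQ :=
  if a then [:: (-1, [:: lx; ly])] else [:: (1, [:: lx; ly])].
Fixpoint d1w (w : word) : hQ :=
  match w with
  | [::] => [::]
  | a :: u => hadd (hmul (d1letter a) (hword u)) (hmul (hword [:: a]) (d1w u))
  end.
Definition d1 : op := linext d1w.

Definition thletter (a : letter) : hQ :=
  hscale (2%:R)^-1 (hadd (hmul (hword [:: a]) hz) (hmul hz (hword [:: a]))).
Fixpoint thw (c : rat) (w : word) : hQ :=
  match w with
  | [::] => [::]
  | a :: u => hadd (hmul (thletter a) (hword u))
               (hadd (hmul (hword [:: a]) (thw c u))
                     (hscale c (hmul (d1letter a) (Hw u))))
  end.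
Definition theta (c : rat) : op := linext (thw c).

Fixpoint phi (c : rat) (n : nat) : op :=
  match n with
  | 0%N => opid
  | m.+1 => opscale (m.+1%:R)^-1
      (opadd (opbr (theta c) (phi c m))
        (opadd (opscale (2%:R)^-1 (opadd (opcomp (Rmul hz) (phi c m))
                                          (opcomp (phi c m) (Rmul hz))))
               (opscale c (opcomp d1 (phi c m)))))
  end.

Definition psi (c : rat) (n : nat) : op :=
  opcomp (Rmul (hword [:: ly])) (opcomp (phi c n.-1) (Rmul (hword [:: lx]))).

(* Main.v *)
From Stdlib Require Import Setoid Morphisms Ring.
Require Import Defs.
From HB Require Import structures.
From mathcomp Require Import all_boot all_order all_algebra.
Import Order.TTheory GRing.Theory Num.Theory.
Local Open Scope ring_scope.

Definition radd (x y : rat) : rat := x + y.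
Definition rmul (x y : rat) : rat := x * y.
Definition ropp (x : rat) : rat := - x.
Definition rsub (x y : rat) : rat := x - y.
Definition r0 : rat := 0.
Definition r1 : rat := 1.
Lemma rat_rt : @ring_theory rat r0 r1 radd rmul rsub ropp eq.
Proof.
constructor; rewrite /radd /rmul /rsub /ropp /r0 /r1;
 [exact: add0r|exact: addrC|exact: addrA|exact: mul1r|exact: mulrC
 |exact: mulrA|exact: mulrDl|by []|exact: subrr].
Qed.
Add Ring ratRing : rat_rt.
Definition rn (n : nat) : rat := n%:R.
Definition rinv (x : rat) : rat := x^-1.
Lemma rnE n : (n%:R : rat) = rn n. Proof. by []. Qed.
Lemma rinvE (x : rat) : x^-1 = rinv x. Proof. by []. Qed.
Lemma raddE (x y : rat) : x + y = radd x y. Proof. by []. Qed.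
Lemma rmulE (x y : rat) : x * y = rmul x y. Proof. by []. Qed.
Lemma roppE (x : rat) : - x = ropp x. Proof. by []. Qed.
Lemma r0E : (0 : rat) = r0. Proof. by []. Qed.
Lemma r1E : (1 : rat) = r1. Proof. by []. Qed.
Ltac rring := rewrite ?mulr1n ?mulr0n ?rnE ?rinvE ?raddE ?rmulE ?roppE ?r0E ?r1E; match goal with |- @eq _ ?x ?y => change (@eq rat x y) end; ring.

Lemma coef_nil w : coef [::] w = 0.
Proof. by rewrite /coef big_nil. Qed.
Lemma coef_cons t p w : coef (t :: p) w = (if t.2 == w then t.1 else 0) + coef p w.
Proof. by rewrite /coef big_cons; case: ifP; rewrite ?add0r. Qed.
Lemma coef_cat p q w : coef (p ++ q) w = coef p w + coef q w.
Proof. by rewrite /coef big_cat. Qed.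
Lemma coef_add p q w : coef (hadd p q) w = coef p w + coef q w.
Proof. exact: coef_cat. Qed.
Lemma coef_scale a p w : coef (hscale a p) w = a * coef p w.
Proof.
elim: p => [|t p IH]; first by rewrite /hscale /= !coef_nil mulr0.
rewrite /hscale /= !coef_cons -/(hscale a p) IH /= mulrDr; congr (_ + _).
by case: ifP; rewrite ?mulr0.
Qed.
Lemma coef_linext f p w : coef (linext f p) w = \sum_(t <- p) t.1 * coef (f t.2) w.
Proof.
elim: p => [|t p IH]; first by rewrite big_nil /linext /= coef_nil.
by rewrite big_cons /linext /= coef_cat coef_scale -IH.
Qed.
Lemma coef_hword u w : coef (hword u) w = if u == w then 1 else 0.
Proof. by rewrite /hword coef_cons coef_nil addr0. Qed.

Lemma sum_pick (s : seq word) v a (g : word -> rat) : uniq s -> v \in s ->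
  \sum_(u <- s) (if v == u then a else 0) * g u = a * g v.
Proof.
elim: s => [|x s IH] //= /andP [xs us]; rewrite in_cons big_cons.
case: (eqVneq v x) => [->|nvx] /= H.
  rewrite big1_seq ?addr0 // => u /andP [_ us'].
  case: eqP => [e|_]; last by rewrite mul0r.
  by rewrite e us' in xs.
by rewrite mul0r add0r IH.
Qed.

Lemma sum_coefs (p : hQ) (g : word -> rat) (s : seq word) : uniq s ->
  {subset map snd p <= s} ->
  \sum_(t <- p) t.1 * g t.2 = \sum_(u <- s) coef p u * g u.
Proof.
move=> us; elim: p => [|t p IH] sub.
  by rewrite big_nil big1 // => u _; rewrite coef_nil mul0r.
rewrite big_cons IH; last by move=> u h; apply: sub; rewrite /= in_cons h orbT.
under [in RHS]eq_bigr => u _ do rewrite coef_cons mulrDl.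
rewrite big_split /= sum_pick //; apply: sub; by rewrite /= in_cons eqxx.
Qed.

Lemma sum_resp p q (g : word -> rat) : heq p q ->
  \sum_(t <- p) t.1 * g t.2 = \sum_(t <- q) t.1 * g t.2.
Proof.
move=> h; rewrite (sum_coefs p g (undup (map snd p ++ map snd q))) ?undup_uniq //;
 last by move=> u hu; rewrite mem_undup mem_cat hu.
rewrite (sum_coefs q g (undup (map snd p ++ map snd q))) ?undup_uniq //;
 last by move=> u hu; rewrite mem_undup mem_cat hu orbT.
by apply: eq_bigr => u _; rewrite h.
Qed.
Lemma hmul_cons_l t p r : hmul (t :: p) r = [seq (t.1 * s.1, t.2 ++ s.2) | s <- r] ++ hmul p r.
Proof. by []. Qed.
Lemma hmul_nil_l r : hmul [::] r = [::].
Proof. by []. Qed.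
Lemma hmul_nil_r p : hmul p [::] = [::].
Proof. by elim: p. Qed.
Lemma hmul_cat_l p q r : hmul (p ++ q) r = hmul p r ++ hmul q r.
Proof. by elim: p => [|t p IH] //=; rewrite !hmul_cons_l IH catA. Qed.
Lemma hmul_add_l p q r : hmul (hadd p q) r = hadd (hmul p r) (hmul q r).
Proof. exact: hmul_cat_l. Qed.
Lemma hmul_scale_l a p r : hmul (hscale a p) r = hscale a (hmul p r).
Proof.
elim: p => [|t p IH] //=; rewrite hmul_cons_l -/(hscale a p) IH /hscale map_cat -!map_comp.
by congr (_ ++ _); apply: eq_map => s /=; rewrite mulrA.
Qed.
Lemma hmul_def p r : hmul p r = linext (fun u => hmul (hword u) r) p.
Proof.
elim: p => [|t p IH] //=; rewrite hmul_cons_l IH /linext /= hmul_cons_l hmul_nil_l cats0.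
by rewrite /hscale -map_comp; congr (_ ++ _); apply: eq_map => s /=; rewrite mul1r.
Qed.
Lemma linext_cat f p q : linext f (p ++ q) = linext f p ++ linext f q.
Proof. by rewrite /linext map_cat flatten_cat. Qed.
Lemma hmul_lin f p r : hmul (linext f p) r = linext (fun u => hmul (f u) r) p.
Proof.
elim: p => [|t p IH] //=; rewrite /linext /= hmul_cat_l -/(linext f p) IH.
by rewrite hmul_scale_l.
Qed.
Lemma hmul_word p u : hmul p (hword u) = [seq (t.1, t.2 ++ u) | t <- p].
Proof. by elim: p => [|t p IH] //=; rewrite hmul_cons_l IH /= mulr1. Qed.
Lemma hmul_map_l (t : rat * word) q r :
  hmul [seq (t.1 * s.1, t.2 ++ s.2) | s <- q] r =
  [seq (t.1 * v.1, t.2 ++ v.2) | v <- hmul q r].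
Proof.
elim: q => [|s q IH] //=; rewrite !hmul_cons_l IH map_cat -map_comp.
by congr (_ ++ _); apply: eq_map => v /=; rewrite mulrA catA.
Qed.
Lemma hmul_assoc p q r : hmul (hmul p q) r = hmul p (hmul q r).
Proof.
elim: p => [|t p IH] //=; rewrite !hmul_cons_l hmul_cat_l IH.
by rewrite hmul_map_l.
Qed.
Lemma hmul_hword u v : hmul (hword u) (hword v) = hword (u ++ v).
Proof. by rewrite /hword hmul_cons_l hmul_nil_l /= mulr1. Qed.
Lemma hmul_hword2 u v X : hmul (hword u) (hmul (hword v) X) = hmul (hword (u ++ v)) X.
Proof. by rewrite -hmul_assoc hmul_hword. Qed.
Lemma hscale_add a p q : hscale a (hadd p q) = hadd (hscale a p) (hscale a q).
Proof. by rewrite /hscale /hadd map_cat. Qed.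
Lemma hscale_scale a b p : hscale a (hscale b p) = hscale (a * b) p.
Proof. by rewrite /hscale -map_comp; apply: eq_map => t /=; rewrite mulrA. Qed.
Lemma hmul_word_r_cat u q r : hmul (hword u) (q ++ r) = hmul (hword u) q ++ hmul (hword u) r.
Proof. by rewrite /hword !hmul_cons_l !hmul_nil_l !cats0 map_cat. Qed.
Lemma hmul_word_r_scale u a q : hmul (hword u) (hscale a q) = hscale a (hmul (hword u) q).
Proof.
rewrite /hword !hmul_cons_l !hmul_nil_l !cats0 /hscale -!map_comp.
by apply: eq_map => s /=; rewrite !mul1r.
Qed.

Lemma coef_mul p r w : coef (hmul p r) w = \sum_(t <- p) t.1 * coef (hmul (hword t.2) r) w.
Proof. by rewrite hmul_def coef_linext. Qed.
Lemma coef_mulw u r w : coef (hmul (hword u) r) w = \sum_(s <- r) s.1 * (if u ++ s.2 == w then 1 else 0).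
Proof.
elim: r => [|s r IH]; first by rewrite hmul_nil_r coef_nil big_nil.
rewrite big_cons -IH /hword !hmul_cons_l !hmul_nil_l !cats0 /= coef_cons /= mul1r.
by case: ifP; rewrite ?mulr1 ?mulr0.
Qed.

Instance heq_equiv : Equivalence heq.
Proof. split; [by move=> p w|by move=> p q h w; rewrite h|by move=> p q r h1 h2 w; rewrite h1 h2]. Qed.
Instance hadd_proper : Proper (heq ==> heq ==> heq) hadd.
Proof. by move=> p p' h q q' h' w; rewrite !coef_add h h'. Qed.
Instance hscale_proper : Proper (eq ==> heq ==> heq) hscale.
Proof. by move=> a a' <- q q' h' w; rewrite !coef_scale h'. Qed.
Instance hmul_proper : Proper (heq ==> heq ==> heq) hmul.
Proof.
move=> p p' h q q' h' w; rewrite !coef_mul.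
rewrite (sum_resp _ _ (fun u => coef (hmul (hword u) q) w) h).
apply: eq_bigr => t _; rewrite !coef_mulw.
by rewrite (sum_resp _ _ (fun v => if t.2 ++ v == w then 1 else 0) h').
Qed.
Instance linext_proper f : Proper (heq ==> heq) (linext f).
Proof. by move=> p q h w; rewrite !coef_linext (sum_resp _ _ (fun u => coef (f u) w) h). Qed.
Lemma linext_ext f g p : (forall u, heq (f u) (g u)) -> heq (linext f p) (linext g p).
Proof. by move=> h w; rewrite !coef_linext; apply: eq_bigr => t _; rewrite h. Qed.
Lemma linext_add f p q : heq (linext f (hadd p q)) (hadd (linext f p) (linext f q)).
Proof. by rewrite /hadd linext_cat. Qed.
Lemma linext_scale f a p : heq (linext f (hscale a p)) (hscale a (linext f p)).
Proof.
move=> w; rewrite coef_scale !coef_linext /hscale big_map mulr_sumr.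
by apply: eq_bigr => t _ /=; rewrite mulrA.
Qed.
Lemma hmul_add_r p q r : heq (hmul p (hadd q r)) (hadd (hmul p q) (hmul p r)).
Proof.
move=> w; rewrite coef_add !coef_mul -big_split; apply: eq_bigr => t _ /=.
by rewrite /hadd hmul_word_r_cat coef_cat mulrDr.
Qed.
Lemma hmul_scale_r p a q : heq (hmul p (hscale a q)) (hscale a (hmul p q)).
Proof.
move=> w; rewrite coef_scale !coef_mul mulr_sumr; apply: eq_bigr => t _ /=.
by rewrite hmul_word_r_scale coef_scale mulrCA.
Qed.

Lemma Hw_eq u : Hw u = hscale (size u)%:R (hword u).
Proof. by rewrite /Hw /hscale /hword /= mulr1. Qed.
Lemma d1l_true : d1letter true = hscale (-1) (hword [:: lx; ly]).
Proof. by rewrite /hscale /hword /= mulr1. Qed.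
Lemma d1l_false : d1letter false = hword [:: lx; ly].
Proof. by []. Qed.
Lemma hadd_nil p : hadd [::] p = p.
Proof. by []. Qed.
Lemma thw_cons c b u : thw c (b :: u) = hadd (hmul (thletter b) (hword u))
               (hadd (hmul (hword [:: b]) (thw c u))
                     (hscale c (hmul (d1letter b) (Hw u)))).
Proof. by []. Qed.
Lemma d1w_cons b u : d1w (b :: u) = hadd (hmul (d1letter b) (hword u)) (hmul (hword [:: b]) (d1w u)).
Proof. by []. Qed.
Definition ind (b : bool) : rat := if b then 1 else 0.
Lemma coef_cons' t p w : coef (t :: p) w = t.1 * ind (t.2 == w) + coef p w.
Proof. by rewrite coef_cons /ind; case: eqP; rewrite ?mulr1 ?mulr0. Qed.

Lemma thw_nil c : thw c [::] = [::]. Proof. by []. Qed.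
Lemma d1w_nil : d1w [::] = [::]. Proof. by []. Qed.
Local Opaque hword hadd hscale hmul Hw d1letter.

Ltac nrm :=
  repeat (first [ progress rewrite ?hmul_assoc
                | progress rewrite ?hmul_hword2 ?hmul_hword
                | progress rewrite ?hscale_add ?hscale_scale ?hmul_nil_l ?hmul_nil_r ?hadd_nil
                | rewrite hmul_add_l | rewrite hmul_scale_l
                | setoid_rewrite hmul_add_r | setoid_rewrite hmul_scale_r ]).

Ltac fin := let w := fresh "w" in move=> w; rewrite ?(coef_add, coef_scale, coef_nil) /=; rring.

Lemma thw_snoc c a u :
  heq (thw c (u ++ [:: a]))
   (hadd (hmul (thw c u) (hword [:: a]))
     (hadd (hscale (2%:R)^-1 (hadd (hmul (hmul (hword u) (hword [:: a])) hz)
                                  (hmul (hmul (hword u) hz) (hword [:: a]))))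
           (hscale c (hmul (d1w u) (hword [:: a]))))).
Proof.
elim: u => [|b u IH].
  rewrite cat0s thw_cons thw_nil Hw_eq /thletter /hz; case: a; rewrite ?d1l_true ?d1l_false; nrm.
  fin. fin.
rewrite cat_cons !thw_cons d1w_cons.
setoid_rewrite IH.
rewrite !Hw_eq /thletter /hz size_cat /= natrD.
case: b; rewrite ?d1l_true ?d1l_false.
all: nrm; rewrite -?catA ?cat_cons ?cat0s; fin.
Qed.

Lemma linext_map f g p : linext f [seq (t.1, g t.2) | t <- p] = linext (fun u => f (g u)) p.
Proof. by rewrite /linext -map_comp. Qed.

Lemma theta_snoc c a p :
  heq (theta c (hmul p (hword [:: a])))
   (hadd (hmul (theta c p) (hword [:: a]))
     (hadd (hscale (2%:R)^-1 (hadd (hmul (hmul p (hword [:: a])) hz)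
                                  (hmul (hmul p hz) (hword [:: a]))))
           (hscale c (hmul (d1 p) (hword [:: a]))))).
Proof.
have e1 : hmul (theta c p) (hword [:: a]) = linext (fun u => hmul (thw c u) (hword [:: a])) p
  by rewrite /theta hmul_lin.
have e2 : hmul (hmul p (hword [:: a])) hz = linext (fun u => hmul (hmul (hword u) (hword [:: a])) hz) p
  by rewrite [hmul p (hword _)]hmul_def !hmul_lin.
have e3 : hmul (hmul p hz) (hword [:: a]) = linext (fun u => hmul (hmul (hword u) hz) (hword [:: a])) p
  by rewrite [hmul p hz]hmul_def !hmul_lin.
have e4 : hmul (d1 p) (hword [:: a]) = linext (fun u => hmul (d1w u) (hword [:: a])) p
  by rewrite /d1 hmul_lin.
rewrite e1 e2 e3 e4 /theta hmul_word (linext_map _ (fun w => w ++ [:: a])).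
rewrite (linext_ext _ _ p (fun u => thw_snoc c a u)) => w.
rewrite !(coef_add, coef_scale, coef_linext) !mulrDr !mulr_sumr -!big_split /=.
by apply: eq_bigr => t _; rewrite !coef_add !coef_scale !coef_add; rring.
Qed.

Instance theta_proper c : Proper (heq ==> heq) (theta c) := linext_proper _.
Instance d1_proper : Proper (heq ==> heq) d1 := linext_proper _.
Lemma theta_add c p q : heq (theta c (hadd p q)) (hadd (theta c p) (theta c q)).
Proof. exact: linext_add. Qed.
Lemma theta_scale c a p : heq (theta c (hscale a p)) (hscale a (theta c p)).
Proof. exact: linext_scale. Qed.
Lemma d1_add p q : heq (d1 (hadd p q)) (hadd (d1 p) (d1 q)).
Proof. exact: linext_add. Qed.
Lemma d1_scale a p : heq (d1 (hscale a p)) (hscale a (d1 p)).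
Proof. exact: linext_scale. Qed.

Lemma phi_S c n p : phi c n.+1 p =
  hscale (n.+1%:R)^-1
    (hadd (hsub (theta c (phi c n p)) (phi c n (theta c p)))
      (hadd (hscale (2%:R)^-1 (hadd (hmul (phi c n p) hz) (phi c n (hmul p hz))))
            (hscale c (d1 (phi c n p))))).
Proof. by []. Qed.
Lemma hsubE p q : hsub p q = hadd p (hscale (-1) q).
Proof. by []. Qed.

Lemma phi_good c n :
  (forall p q, heq p q -> heq (phi c n p) (phi c n q)) /\
  (forall p q, heq (phi c n (hadd p q)) (hadd (phi c n p) (phi c n q))) /\
  (forall a p, heq (phi c n (hscale a p)) (hscale a (phi c n p))).
Proof.
elim: n => [|n [IHr [IHa IHs]]].
  by split; [move=> p q h|split=> *; reflexivity].
have Pr : Proper (heq ==> heq) (phi c n) by move=> p q h; apply: IHr.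
split; [|split].
- move=> p q h; rewrite !phi_S !hsubE.
  by setoid_rewrite h.
- move=> p q; rewrite !phi_S !hsubE.
  setoid_rewrite IHa; setoid_rewrite theta_add; setoid_rewrite IHa.
  rewrite !hmul_add_l; setoid_rewrite IHa; setoid_rewrite d1_add.
  fin.
- move=> a p; rewrite !phi_S !hsubE.
  setoid_rewrite IHs; setoid_rewrite theta_scale; setoid_rewrite IHs.
  rewrite !hmul_scale_l; setoid_rewrite IHs; setoid_rewrite d1_scale.
  fin.
Qed.

Theorem mainTheorem4 (c : rat) :
  opeq (psi c 1) (Rmul (hword [:: lx; ly])) /\
  (forall n : nat, (2 <= n)%N ->
    opeq (psi c n)
      (opscale (n.-1%:R)^-1
        (opsub (opbr (theta c) (psi c n.-1))
          (opadd (opscale (2%:R)^-1 (opadd (opcomp (Rmul hz) (psi c n.-1))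
                                            (opcomp (psi c n.-1) (Rmul hz))))
                 (opscale c (opcomp (psi c n.-1) d1)))))).
Proof.
split.
  move=> p; rewrite /psi /Rmul /opcomp /opid /= hmul_assoc hmul_hword.
  reflexivity.
case=> [|[|m]] // _ p.
have [IHr [IHa IHs]] := phi_good c m.
have Pr : Proper (heq ==> heq) (phi c m) by move=> x y h; apply: IHr.
rewrite /psi /opscale /opbr /opsub /opadd /opcomp /Rmul !succnK phi_S !hsubE.
setoid_rewrite (theta_snoc c lx p).
setoid_rewrite (theta_snoc c ly (phi c m (hmul p (hword [:: lx])))).
repeat (first [setoid_rewrite IHa | setoid_rewrite IHs]).
rewrite !(hmul_add_l, hmul_scale_l).
fin.
Qed.
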